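(* Assume ({\bf A}($\gamma,\nu$)) with $\nu\in(0,1)$. For every $\kappa\in(\nu,1)$ there exist constants $C>0$, $c_\kappa>0$, $C_\kappa>0$ such that for all $v,V\in\mathbb R^2$: $$\int_{-\pi/2}^{\pi/2}\Big(e^{|V+A(\theta)(V-v)|^\kappa}-e^{|V|^\kappa}\Big)b(\theta)d\theta\le e^{|V|^\kappa}\Big[-c_\kappa\mathbf 1_{\{|V|\ge1,\ |V|\ge C|v|\}}+C_\kappa(|V|\vee1)^{\kappa+\nu-2}e^{C_\kappa|v|^\kappa}\Big],$$ $$\int_{-\pi/2}^{\pi/2}\Big|e^{|V+A(\theta)(V-v)|^\kappa}-e^{|V|^\kappa}\Big|b(\theta)d\theta\le C_\kappa e^{C_\kappa|v|^\kappa}e^{C_\kappa|V|^\kappa}.$$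
   Context: Assumption ({\bf A}($\gamma,\nu$)): the cross section is $B(|v-v_*|,\theta)=|v-v_*|^\gamma b(\theta)$, where $b:[-\pi/2,\pi/2]\setminus\{0\}\to\mathbb R_+$ is an even smooth function such that for some $0<c<C$, $c\theta^{-1-\nu}\le b(\theta)\le C\theta^{-1-\nu}$ for all $\theta\in(0,\pi/2]$, and for every $k\ge1$ there is $C_k$ with $|b^{(k)}(\theta)|\le C_k\theta^{-1-\nu-k}$ for $\theta\in(0,\pi/2]$. $A(\theta)=\frac12(R_\theta-I)$, where $R_\theta$ is the rotation of angle $\theta$ in $\mathbb R^2$. *)

(* Defs.v *)
From Stdlib Require Import Reals Lra.
Open Scope R_scope.

Definition vec2 := (R * R)%type.

Definition vnorm (w : vec2) : R := sqrt (fst w * fst w + snd w * snd w).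

Definition vadd (w z : vec2) : vec2 := (fst w + fst z, snd w + snd z).
Definition vsub (w z : vec2) : vec2 := (fst w - fst z, snd w - snd z).

(* A(theta) = (R_theta - I)/2 applied to w, R_theta the rotation of angle theta. *)
Definition Amat (theta : R) (w : vec2) : vec2 :=
  (((cos theta - 1) * fst w - sin theta * snd w) / 2,
   (sin theta * fst w + (cos theta - 1) * snd w) / 2).

(* Real power x^a for x >= 0, with the convention 0^a = 0 (used only for a > 0
   at x = 0); Stdlib's Rpower 0 a would be 1. *)
Definition rpow (x a : R) : R :=
  if Req_EM_T x 0 then 0 else Rpower x a.

Definition int_on (F : R -> R) (a b v : R) : Prop :=
  exists pr : Riemann_integrable F a b, RiemannInt pr = v.

(* Improper integral over [-pi/2, pi/2] with a (possible) singularity at 0: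
   I = lim_{e -> 0+} ( int_{-pi/2}^{-e} F + int_{e}^{pi/2} F ). *)
Definition improper_int_sym (F : R -> R) (I : R) : Prop :=
  exists Lf Rf : R -> R,
    (forall e, 0 < e < PI / 2 ->
       int_on F (- (PI / 2)) (- e) (Lf e) /\ int_on F e (PI / 2) (Rf e)) /\
    (forall eps, 0 < eps -> exists delta, 0 < delta /\
       forall e, 0 < e < delta -> e < PI / 2 -> Rabs (Lf e + Rf e - I) < eps).

(* Assumption A(gamma,nu) on the angular kernel b (gamma plays no role here). *)
Definition assumption_A (nu : R) (b : R -> R) : Prop :=
  (forall theta, 0 < Rabs theta <= PI / 2 -> b (- theta) = b theta) /\
  (exists c C, 0 < c < C /\
     forall theta, 0 < theta <= PI / 2 ->
       c * rpow theta (-1 - nu) <= b theta <= C * rpow theta (-1 - nu)) /\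
  (exists d : nat -> R -> R,
     (forall theta, d O theta = b theta) /\
     (forall k theta, 0 < Rabs theta <= PI / 2 ->
        derivable_pt_lim (d k) theta (d (S k) theta)) /\
     (forall k, (1 <= k)%nat -> exists Ck, forall theta, 0 < theta <= PI / 2 ->
        Rabs (d k theta) <= Ck * rpow theta (-1 - nu - INR k))).


Definition indic_far (C : R) (v V : vec2) : R :=
  if Rle_dec 1 (vnorm V) then
    (if Rle_dec (C * vnorm v) (vnorm V) then 1 else 0)
  else 0.

Definition expdiff (kappa : R) (v V : vec2) (theta : R) : R :=
  exp (rpow (vnorm (vadd V (Amat theta (vsub V v)))) kappa)
  - exp (rpow (vnorm V) kappa).

(* Main.v *)
Require Import Defs.
From Stdlib Require Import Reals Lra Psatz ClassicalEpsilon Classical FunctionalExtensionality.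
Open Scope R_scope.

Lemma rpow_pos_eq x a : 0 < x -> rpow x a = Rpower x a.
Proof. intro H; unfold rpow; destruct (Req_EM_T x 0); [lra|auto]. Qed.

Lemma rpow_0 a : rpow 0 a = 0.
Proof. unfold rpow; destruct (Req_EM_T 0 0); [auto|lra]. Qed.

Lemma rpow_nonneg x a : 0 <= rpow x a.
Proof. unfold rpow; destruct (Req_EM_T x 0); [lra|]. unfold Rpower; left; apply exp_pos. Qed.

Lemma rpow_pos x a : 0 < x -> 0 < rpow x a.
Proof. intro; rewrite rpow_pos_eq; auto; unfold Rpower; apply exp_pos. Qed.

Lemma rpow_1 a : rpow 1 a = 1.
Proof. rewrite rpow_pos_eq by lra. unfold Rpower; rewrite ln_1, Rmult_0_r, exp_0; auto. Qed.

Lemma rpow_le_mono x y a : 0 <= x <= y -> 0 < a -> rpow x a <= rpow y a.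
Proof.
  intros [H1 H2] Ha. destruct (Req_dec x 0) as [->|Hx].
  - rewrite rpow_0; apply rpow_nonneg.
  - rewrite !rpow_pos_eq by lra. apply Rle_Rpower_l; lra.
Qed.

Lemma rpow_lt_mono x y a : 0 <= x < y -> 0 < a -> rpow x a < rpow y a.
Proof.
  intros [H1 H2] Ha. destruct (Req_dec x 0) as [->|Hx].
  - rewrite rpow_0; apply rpow_pos; lra.
  - rewrite !rpow_pos_eq by lra. apply Rlt_Rpower_l; lra.
Qed.

Lemma rpow_mult x y a : 0 <= x -> 0 <= y -> rpow (x*y) a = rpow x a * rpow y a.
Proof.
  intros Hx Hy. destruct (Req_dec x 0) as [->|Hx'].
  { rewrite Rmult_0_l, rpow_0; ring. }
  destruct (Req_dec y 0) as [->|Hy'].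
  { rewrite Rmult_0_r, rpow_0; ring. }
  rewrite !rpow_pos_eq by nra. rewrite Rpower_mult_distr; auto; lra.
Qed.

Lemma rpow_plus x a b : 0 < x -> rpow x (a+b) = rpow x a * rpow x b.
Proof. intro; rewrite !rpow_pos_eq by auto. apply Rpower_plus. Qed.

Lemma rpow_one x : 0 <= x -> rpow x 1 = x.
Proof. intros H. destruct (Req_dec x 0) as [->|]. apply rpow_0.
  rewrite rpow_pos_eq by lra. apply Rpower_1; lra. Qed.

Lemma rpow_zero x : 0 < x -> rpow x 0 = 1.
Proof. intros H. rewrite rpow_pos_eq by lra. apply Rpower_O; lra. Qed.

Lemma rpow_rpow x a b : 0 <= x -> rpow (rpow x a) b = rpow x (a*b).
Proof.
  intros H. destruct (Req_dec x 0) as [->|].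
  - rewrite !rpow_0; auto.
  - rewrite (rpow_pos_eq x a) by lra. rewrite !rpow_pos_eq; try lra. apply Rpower_mult. unfold Rpower; apply exp_pos.
Qed.

Lemma exp_convex k x y : 0 <= k <= 1 ->
  exp (k*x + (1-k)*y) <= k * exp x + (1-k) * exp y.
Proof.
  intros Hk. set (m := k*x + (1-k)*y).
  assert (E1 : exp m * (1 + (x - m)) <= exp x).
  { replace x with (m + (x-m)) at 2 by ring. rewrite exp_plus.
    apply Rmult_le_compat_l; [left; apply exp_pos| apply exp_ineq1_le]. }
  assert (E2 : exp m * (1 + (y - m)) <= exp y).
  { replace y with (m + (y-m)) at 2 by ring. rewrite exp_plus.
    apply Rmult_le_compat_l; [left; apply exp_pos| apply exp_ineq1_le]. }
  assert (exp m = k * (exp m * (1 + (x - m))) + (1-k) * (exp m * (1 + (y - m)))).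
  { unfold m; ring. }
  nra.
Qed.

Lemma bernoulli_conc z k : 0 < z -> 0 <= k <= 1 -> Rpower z k <= 1 + k * (z - 1).
Proof.
  intros Hz Hk. unfold Rpower.
  replace (k * ln z) with (k * ln z + (1-k)*0) by ring.
  eapply Rle_trans; [apply exp_convex; auto|].
  rewrite exp_ln, exp_0 by auto. lra.
Qed.

Lemma rpow_tangent x y k : 0 <= x -> 0 < y -> 0 < k < 1 ->
  rpow x k <= rpow y k + k * rpow y (k-1) * (x - y).
Proof.
  intros Hx Hy Hk.
  assert (Hyk : rpow y (k-1) * y = rpow y k).
  { rewrite <- (rpow_one y) at 2 by lra. rewrite <- rpow_plus by auto. f_equal; ring. }
  destruct (Req_dec x 0) as [->|Hx0].
  - rewrite rpow_0. assert (0 <= rpow y k) by apply rpow_nonneg. nra.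
  - assert (Hz : 0 < x / y) by (apply Rdiv_lt_0_compat; lra).
    assert (B := bernoulli_conc (x/y) k Hz ltac:(lra)).
    assert (Ex : x = y * (x/y)) by (field; lra).
    rewrite Ex at 1. rewrite rpow_mult by lra. rewrite (rpow_pos_eq (x/y)) by auto.
    assert (Hp : 0 < rpow y k) by (apply rpow_pos; auto).
    assert (x - y = y * (x/y - 1)) by (field; lra).
    rewrite H. rewrite <- Rmult_assoc, (Rmult_assoc k), Hyk.
    replace (rpow y k + k * rpow y k * (x/y-1)) with (rpow y k * (1 + k*(x/y-1))) by ring.
    apply Rmult_le_compat_l; lra.
Qed.

Lemma rpow_ge_self z k : 0 <= z <= 1 -> 0 < k <= 1 -> z <= rpow z k.
Proof.
  intros Hz Hk. destruct (Req_dec z 0) as [->|]. rewrite rpow_0; lra.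
  rewrite rpow_pos_eq by lra. unfold Rpower.
  assert (ln z <= 0).
  { destruct (Req_dec z 1) as [->|]. rewrite ln_1; lra.
    left; rewrite <- ln_1; apply ln_increasing; lra. }
  rewrite <- (exp_ln z) at 1 by lra.
  assert (E : ln z <= k * ln z) by nra.
  destruct E as [E|E]; [left; apply exp_increasing; auto| rewrite <- E; lra].
Qed.

Lemma rpow_subadd x y k : 0 <= x -> 0 <= y -> 0 < k <= 1 ->
  rpow (x+y) k <= rpow x k + rpow y k.
Proof.
  intros Hx Hy Hk.
  destruct (Req_dec x 0) as [->|Hx0]. { rewrite Rplus_0_l, rpow_0; lra. }
  destruct (Req_dec y 0) as [->|Hy0]. { rewrite Rplus_0_r, rpow_0; lra. }
  set (s := x + y).
  assert (Hs : 0 < s) by (unfold s; lra).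
  assert (X1 : rpow x k = rpow s k * rpow (x/s) k).
  { rewrite <- rpow_mult by (try lra; left; apply Rdiv_lt_0_compat; lra). f_equal; field; lra. }
  assert (Y1 : rpow y k = rpow s k * rpow (y/s) k).
  { rewrite <- rpow_mult by (try lra; left; apply Rdiv_lt_0_compat; lra). f_equal; field; lra. }
  assert (A1 : x/s <= rpow (x/s) k).
  { apply rpow_ge_self; auto. split. left; apply Rdiv_lt_0_compat; lra.
    apply Rmult_le_reg_r with s; auto. unfold Rdiv; rewrite Rmult_assoc, Rinv_l by lra. unfold s; lra. }
  assert (A2 : y/s <= rpow (y/s) k).
  { apply rpow_ge_self; auto. split. left; apply Rdiv_lt_0_compat; lra.
    apply Rmult_le_reg_r with s; auto. unfold Rdiv; rewrite Rmult_assoc, Rinv_l by lra. unfold s; lra. }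
  assert (Hp : 0 < rpow s k) by (apply rpow_pos; auto).
  assert (x/s + y/s = 1) by (unfold s; field; lra).
  rewrite X1, Y1. nra.
Qed.

Lemma polyexp m k : 0 < m -> 0 < k -> exists K, 0 < K /\
  forall x, 0 <= x -> rpow x m <= K * exp (rpow x k).
Proof.
  intros Hm Hk. set (q := m / k). assert (Hq : 0 < q) by (apply Rdiv_lt_0_compat; auto).
  exists (exp (q * (ln q - 1))). split. apply exp_pos.
  intros x Hx. destruct (Req_dec x 0) as [->|Hx0].
  { rewrite rpow_0. left; apply Rmult_lt_0_compat; apply exp_pos. }
  set (t := rpow x k). assert (Ht : 0 < t) by (apply rpow_pos; lra).
  assert (Em : rpow x m = rpow t q).
  { unfold t. rewrite rpow_rpow by lra. f_equal. unfold q; field; lra. }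
  rewrite Em, rpow_pos_eq by auto. unfold Rpower. rewrite <- exp_plus.
  destruct (Rle_lt_dec (q * ln t) (q * (ln q - 1) + t)) as [L|L].
  - destruct L as [L|L]. left; apply exp_increasing; auto. rewrite L; lra.
  - exfalso.
    assert (Hl : ln (t/q) <= t/q - 1).
    { assert (Hp : 0 < t/q) by (apply Rdiv_lt_0_compat; auto).
      pose proof (exp_ineq1_le (ln (t/q))). rewrite exp_ln in H by auto. lra. }
    unfold Rdiv in Hl. rewrite ln_mult in Hl by (auto; apply Rinv_0_lt_compat; auto).
    rewrite ln_Rinv in Hl by auto.
    assert (q * ln t <= q * (t * / q - 1 + ln q)) by (apply Rmult_le_compat_l; lra).
    replace (q * (t * / q - 1 + ln q)) with (t + q * (ln q - 1)) in H by (field; lra).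
    lra.
Qed.

Lemma exp_diff_bound x y z : x <= z -> y <= z -> Rabs (exp x - exp y) <= exp z * Rabs (x - y).
Proof.
  intros Hx Hy.
  assert (G : forall x y, y <= x -> x <= z -> exp x - exp y <= exp z * (x - y)).
  { intros p q Hpq Hp. 
    assert (exp p * (1 + (q - p)) <= exp q).
    { replace q with (p + (q-p)) at 2 by ring. rewrite exp_plus.
      apply Rmult_le_compat_l; [left; apply exp_pos| apply exp_ineq1_le]. }
    assert (exp p <= exp z) by (destruct Hp as [Hp|Hp]; [left; apply exp_increasing; auto| rewrite Hp; lra]).
    nra. }
  destruct (Rle_dec y x).
  - assert (exp y <= exp x) by (destruct r as [r|r]; [left; apply exp_increasing; auto| rewrite r; lra]).
    rewrite !Rabs_right by lra. apply G; auto.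
  - assert (exp x <= exp y) by (left; apply exp_increasing; lra).
    rewrite Rabs_left1 by lra. rewrite Rabs_left by lra.
    replace (- (exp x - exp y)) with (exp y - exp x) by ring.
    replace (- (x - y)) with (y - x) by ring. apply G; lra.
Qed.

Lemma expm1_le F : 0 <= F -> exp F - 1 <= F * exp F.
Proof.
  intros H. pose proof (exp_ineq1_le (-F)). rewrite exp_Ropp in H0.
  assert (0 < exp F) by apply exp_pos.
  assert (exp F * (1 + - F) <= exp F * / exp F) by (apply Rmult_le_compat_l; lra).
  rewrite Rinv_r in H2 by lra. nra.
Qed.

Lemma vnorm_nonneg w : 0 <= vnorm w.
Proof. apply sqrt_pos. Qed.

Lemma vnorm_sq w : vnorm w * vnorm w = fst w * fst w + snd w * snd w.
Proof. unfold vnorm. apply sqrt_sqrt. nra. Qed.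

Lemma sq_le a b : 0 <= b -> a * a <= b * b -> a <= b.
Proof. intros. nra. Qed.

Lemma abs_le_inv x b : Rabs x <= b -> -b <= x <= b.
Proof. unfold Rabs; destruct (Rcase_abs x); intros; lra. Qed.

Lemma sq_abs_le x b : 0 <= b -> x * x <= b * b -> Rabs x <= b.
Proof. intros. apply Rabs_le. split; nra. Qed.

Lemma vnorm_rev_tri x y : Rabs (vnorm x - vnorm y) <= vnorm (vsub x y).
Proof.
  pose proof (vnorm_sq x). pose proof (vnorm_sq y). pose proof (vnorm_sq (vsub x y)).
  pose proof (vnorm_nonneg x). pose proof (vnorm_nonneg y). pose proof (vnorm_nonneg (vsub x y)).
  destruct x as [x1 x2], y as [y1 y2]. unfold vsub in *; simpl in *.
  set (nx := vnorm (x1,x2)) in *. set (ny := vnorm (y1,y2)) in *. set (nd := vnorm (x1-y1,x2-y2)) in *.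
  assert (CS : x1*y1 + x2*y2 <= nx * ny).
  { assert ((x1*y1+x2*y2)*(x1*y1+x2*y2) <= (nx*ny)*(nx*ny)).
    { replace ((nx*ny)*(nx*ny)) with ((nx*nx)*(ny*ny)) by ring. rewrite H, H0.
      pose proof (pow2_ge_0 (x1*y2 - x2*y1)). nra. }
    assert (0 <= nx*ny) by nra. nra. }
  assert ((nx-ny)*(nx-ny) <= nd*nd) by nra.
  apply Rabs_le. split; nra.
Qed.

Lemma vnorm_tri x y : vnorm (vadd x y) <= vnorm x + vnorm y.
Proof.
  pose proof (vnorm_sq x). pose proof (vnorm_sq y). pose proof (vnorm_sq (vadd x y)).
  pose proof (vnorm_nonneg x). pose proof (vnorm_nonneg y). pose proof (vnorm_nonneg (vadd x y)).
  destruct x as [x1 x2], y as [y1 y2]. unfold vadd in *; simpl in *.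
  set (nx := vnorm (x1,x2)) in *. set (ny := vnorm (y1,y2)) in *. set (nd := vnorm (x1+y1,x2+y2)) in *.
  assert (CS : x1*y1 + x2*y2 <= nx * ny).
  { assert ((x1*y1+x2*y2)*(x1*y1+x2*y2) <= (nx*ny)*(nx*ny)).
    { replace ((nx*ny)*(nx*ny)) with ((nx*nx)*(ny*ny)) by ring. rewrite H, H0.
      pose proof (pow2_ge_0 (x1*y2 - x2*y1)). nra. }
    assert (0 <= nx*ny) by nra. nra. }
  apply sq_le; nra.
Qed.

Lemma vnorm_sub_le x y : vnorm (vsub x y) <= vnorm x + vnorm y.
Proof.
  replace (vsub x y) with (vadd x (-fst y, - snd y)) by (unfold vsub, vadd; simpl; f_equal; ring).
  eapply Rle_trans; [apply vnorm_tri|].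
  assert (E : vnorm (-fst y, -snd y) = vnorm y) by (unfold vnorm; simpl; f_equal; ring).
  rewrite E; lra.
Qed.

Definition uvec (v V : vec2) (th : R) : vec2 := vadd V (Amat th (vsub V v)).
Definition crossX (v V : vec2) : R := fst V * snd v - snd V * fst v.

Lemma key_formula v V th :
  vnorm (uvec v V th) * vnorm (uvec v V th) =
  vnorm V * vnorm V - (1 - cos th) * (vnorm V * vnorm V - vnorm v * vnorm v) / 2
  + sin th * crossX v V.
Proof.
  rewrite !vnorm_sq. destruct v as [v1 v2], V as [V1 V2].
  unfold uvec, crossX, Amat, vadd, vsub; simpl.
  pose proof (sin2_cos2 th). unfold Rsqr in H.
  assert (E : forall s c : R, s*s = 1 - c*c ->
   (V1 + ((c - 1) * (V1 - v1) - s * (V2 - v2)) / 2) *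
   (V1 + ((c - 1) * (V1 - v1) - s * (V2 - v2)) / 2) +
   (V2 + (s * (V1 - v1) + (c - 1) * (V2 - v2)) / 2) *
   (V2 + (s * (V1 - v1) + (c - 1) * (V2 - v2)) / 2) =
   V1 * V1 + V2 * V2 -
   (1 - c) * (V1 * V1 + V2 * V2 - (v1 * v1 + v2 * v2)) / 2 +
   s * (V1 * v2 - V2 * v1)).
  { intros s c Hs. 
    transitivity ( V1 * V1 + V2 * V2 -
   (1 - c) * (V1 * V1 + V2 * V2 - (v1 * v1 + v2 * v2)) / 2 +
   s * (V1 * v2 - V2 * v1) + (s*s - (1 - c*c)) * ((V1-v1)*(V1-v1) + (V2-v2)*(V2-v2))/4);
    [field | rewrite Hs; field]. }
  apply E. lra.
Qed.

Lemma cross_bound v V : Rabs (crossX v V) <= vnorm V * vnorm v.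
Proof.
  pose proof (vnorm_sq v). pose proof (vnorm_sq V).
  pose proof (vnorm_nonneg v). pose proof (vnorm_nonneg V).
  destruct v as [v1 v2], V as [V1 V2]. unfold crossX; simpl in *.
  set (a := vnorm (V1,V2)) in *. set (r := vnorm (v1,v2)) in *.
  assert (((V1*v2 - V2*v1))*((V1*v2 - V2*v1)) <= (a*r)*(a*r)).
  { replace ((a*r)*(a*r)) with ((a*a)*(r*r)) by ring. rewrite H, H0. pose proof (pow2_ge_0 (V1*v1 + V2*v2)). nra. }
  apply sq_abs_le; auto. nra.
Qed.

Lemma cos_lb1 th : -(PI/2) <= th <= PI/2 -> 1 - th*th/2 <= cos th.
Proof.
  intros H. destruct (cos_bound th 0 ltac:(lra) ltac:(lra)) as [H1 _].
  unfold cos_approx, cos_term in H1; simpl in H1. lra.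
Qed.

Lemma cos_ub1 th : -(PI/2) <= th <= PI/2 -> cos th <= 1 - th*th/5.
Proof.
  intros H. destruct (cos_bound th 0 ltac:(lra) ltac:(lra)) as [_ H1].
  unfold cos_approx, cos_term in H1; simpl in H1.
  pose proof PI_4. assert (th*th <= 4) by nra. nra.
Qed.

Lemma sin_abs_le th : Rabs (sin th) <= Rabs th.
Proof.
  destruct (Rtotal_order th 0) as [H|[H|H]].
  - pose proof (sin_lt_x (-th) ltac:(lra)). rewrite sin_neg in H0.
    pose proof (SIN_bound th).
    destruct (Rle_dec 0 (sin th)).
    + rewrite Rabs_right, Rabs_left by lra.
      destruct (Rlt_dec (-th) 2).
      * pose proof (sin_pos_tech (-th) ltac:(lra)). rewrite sin_neg in H2. lra.
      * lra.
    + rewrite Rabs_left, Rabs_left by lra. lra.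
  - subst; rewrite sin_0; lra.
  - pose proof (sin_lt_x th H).
    destruct (Rle_dec 0 (sin th)).
    + rewrite !Rabs_right by lra. lra.
    + rewrite Rabs_left, Rabs_right by lra.
      pose proof (sin_lt_x (-th)). pose proof (SIN_bound th).
      (* sin th < 0 with th > 0: then -sin th <= 1; need <= th only if th >= 1, else sin>0 *)
      destruct (Rlt_dec th 2).
      * pose proof (sin_pos_tech th ltac:(lra)). lra.
      * lra.
Qed.

Lemma u_le v V th : vnorm (uvec v V th) <= vnorm V + vnorm v.
Proof.
  pose proof (key_formula v V th). pose proof (cross_bound v V).
  pose proof (vnorm_nonneg V). pose proof (vnorm_nonneg v). pose proof (vnorm_nonneg (uvec v V th)).
  pose proof (COS_bound th). pose proof (SIN_bound th).
  set (a := vnorm V) in *. set (r := vnorm v) in *. set (X := crossX v V) in *.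
  set (n := vnorm (uvec v V th)) in *.
  assert (Hs : Rabs (sin th * X) <= a * r).
  { rewrite Rabs_mult. assert (Rabs (sin th) <= 1) by (apply Rabs_le; lra).
    pose proof (Rabs_pos X). nra. }
  apply abs_le_inv in Hs.
  apply sq_le. lra. set (k := (1 - cos th)/2).
  assert (0 <= k <= 1) by (unfold k; lra).
  replace (a * a - (1 - cos th) * (a * a - r * r) / 2) with ((1-k)*(a*a) + k*(r*r)) in H by (unfold k; field).
  nra.
Qed.

Lemma Amat_norm th W : -(PI/2) <= th <= PI/2 -> vnorm (Amat th W) <= Rabs th * vnorm W / 2.
Proof.
  intros Hth. pose proof (vnorm_sq (Amat th W)). pose proof (vnorm_sq W).
  pose proof (vnorm_nonneg (Amat th W)). pose proof (vnorm_nonneg W).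
  pose proof (cos_lb1 th Hth). pose proof (COS_bound th).
  pose proof (sin2_cos2 th). unfold Rsqr in H5.
  destruct W as [w1 w2]. unfold Amat in *; simpl in *.
  set (n := vnorm (((cos th - 1) * w1 - sin th * w2) / 2, (sin th * w1 + (cos th - 1) * w2) / 2)) in *.
  set (w := vnorm (w1,w2)) in *.
  assert (E : n * n = (1 - cos th)/2 * (w*w)).
  { rewrite H, H0.
    transitivity ((1 - cos th)/2 * (w1*w1+w2*w2) + (sin th * sin th + cos th * cos th - 1)*(w1*w1+w2*w2)/4); [field|].
    rewrite H5; field. }
  apply sq_le. pose proof (Rabs_pos th); nra.
  replace (Rabs th * w / 2 * (Rabs th * w / 2)) with ((Rabs th * Rabs th) * (w*w)/4) by field.
  rewrite <- Rabs_mult, Rabs_right by nra. rewrite E. nra.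
Qed.

Lemma u_close v V th : -(PI/2) <= th <= PI/2 ->
  Rabs (vnorm (uvec v V th) - vnorm V) <= Rabs th * (vnorm V + vnorm v) / 2.
Proof.
  intros Hth. eapply Rle_trans; [apply vnorm_rev_tri|].
  replace (vsub (uvec v V th) V) with (Amat th (vsub V v)).
  2:{ unfold uvec, vsub, vadd, Amat; simpl. f_equal; field. }
  eapply Rle_trans; [apply Amat_norm; auto|].
  pose proof (vnorm_sub_le V v). pose proof (Rabs_pos th). 
  unfold Rdiv. apply Rmult_le_compat_r; [lra|]. apply Rmult_le_compat_l; lra.
Qed.

Lemma int_on_unique f a b v w : int_on f a b v -> int_on f a b w -> v = w.
Proof. intros [p1 H1] [p2 H2]. subst. apply RiemannInt_P5. Qed.

Lemma int_on_cont f a b : a <= b -> (forall x, a <= x <= b -> continuity_pt f x) ->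
  exists v, int_on f a b v.
Proof. intros H C. exists (RiemannInt (continuity_implies_RiemannInt H C)). eexists; eauto. Qed.

Lemma int_on_le f g a b v w : a <= b -> int_on f a b v -> int_on g a b w ->
  (forall x, a < x < b -> f x <= g x) -> v <= w.
Proof. intros H [p1 H1] [p2 H2] L. subst. apply RiemannInt_P19; auto. Qed.

Lemma int_on_chasles f a b c v w : int_on f a b v -> int_on f b c w -> int_on f a c (v + w).
Proof.
  intros [p1 H1] [p2 H2]. exists (RiemannInt_P24 p1 p2). subst.
  symmetry; apply RiemannInt_P26.
Qed.

Lemma int_on_lin f g a b v w l : int_on f a b v -> int_on g a b w ->
  int_on (fun x => f x + l * g x) a b (v + l * w).
Proof.
  intros [p1 H1] [p2 H2]. exists (RiemannInt_P10 l p1 p2). subst.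
  apply RiemannInt_P13.
Qed.

Lemma int_on_ext f g a b v : a <= b -> (forall x, a <= x <= b -> f x = g x) ->
  int_on f a b v -> int_on g a b v.
Proof.
  intros H E [p1 H1].
  assert (E' : forall x, Rmin a b <= x <= Rmax a b -> f x = g x).
  { rewrite Rmin_left, Rmax_right by auto. auto. }
  exists (@Riemann_integrable_ext f g a b E' p1). subst.
  symmetry; apply RiemannInt_P18; auto. intros; apply E; lra.
Qed.

Lemma ftc f G a b : a <= b -> (forall x, a <= x <= b -> continuity_pt f x) ->
  (forall x, a <= x <= b -> derivable_pt_lim G x (f x)) ->
  int_on f a b (G b - G a).
Proof.
  intros H C D.
  exists (continuity_implies_RiemannInt H C).
  rewrite (RiemannInt_P20 H (FTC_P1 H C)).
  assert (A1 := RiemannInt_P29 H C).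
  assert (A2 : antiderivative f G a b).
  { split; auto. intros x Hx. exists (exist _ (f x) (D x Hx)).
    symmetry; apply derive_pt_eq_0. apply D; auto. }
  destruct (antiderivative_Ucte _ _ _ _ _ A1 A2) as [c Hc].
  rewrite (Hc b), (Hc a) by lra. ring.
Qed.

Lemma int_opp f x y : x <= y -> (forall t, -y <= t <= -x -> continuity_pt f t) ->
  exists v, int_on f (-y) (-x) v /\ int_on (fun t => f (-t)) x y v.
Proof.
  intros H C. assert (H' : -y <= -x) by lra.
  set (P := primitive H' (FTC_P1 H' C)).
  assert (DP : forall t, -y <= t <= -x -> derivable_pt_lim P t (f t)).
  { intros t Ht. apply RiemannInt_P28; auto. }
  exists (P (-x) - P (-y)). split.
  - apply (ftc f P); auto.
  - replace (P (-x) - P (-y)) with ((fun t => - P (-t)) y - (fun t => - P (-t)) x) by ring.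
    apply (ftc _ (fun t => - P (-t))); auto.
    + intros t Ht. change (fun t0 => f (- t0)) with (comp f Ropp).
      apply continuity_pt_comp.
      { apply derivable_continuous_pt. exists (-1). change Ropp with (- id)%F.
        apply derivable_pt_lim_opp, derivable_pt_lim_id. }
      apply C; lra.
    + intros t Ht.
      assert (D1 : derivable_pt_lim Ropp t (-1)).
      { change Ropp with (- id)%F. apply derivable_pt_lim_opp, derivable_pt_lim_id. }
      assert (D2 := derivable_pt_lim_comp Ropp P t (-1) (f (-t)) D1 (DP (-t) ltac:(lra))).
      assert (D3 := derivable_pt_lim_opp _ _ _ D2).
      replace (f (-t)) with (- (f (-t) * -1)) by ring.
      exact D3.
Qed.

Lemma rpow_cont_pos t p : 0 < t -> continuity_pt (fun x => rpow x p) t.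
Proof.
  intros Ht. 
  assert (C : continuity_pt (fun x => Rpower x p) t).
  { apply derivable_continuous_pt. exists (p * Rpower t (p-1)). apply derivable_pt_lim_power; auto. }
  intros eps Heps. destruct (C eps Heps) as [d [Hd Hx]].
  exists (Rmin d t). split. apply Rmin_pos; lra.
  intros x [Dx Hxd]. simpl in *. unfold R_dist in *.
  assert (Hxt : Rabs (x - t) < t) by (eapply Rlt_le_trans; [apply Hxd| apply Rmin_r]).
  assert (0 < x) by (apply abs_lt_inv' in Hxt || (unfold Rabs in Hxt; destruct (Rcase_abs (x - t)); lra)).
  rewrite !rpow_pos_eq by auto. apply Hx. split; auto.
  eapply Rlt_le_trans; [apply Hxd| apply Rmin_l].
Qed.

Lemma int_pow x y q : 0 < q -> 0 < x <= y ->
  int_on (fun t => rpow t (q - 1)) x y ((rpow y q - rpow x q) / q).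
Proof.
  intros Hq Hxy.
  replace ((rpow y q - rpow x q) / q) with ((fun t => Rpower t q / q) y - (fun t => Rpower t q / q) x).
  2:{ rewrite !rpow_pos_eq by lra. field; lra. }
  apply (ftc _ (fun t => Rpower t q / q)); try lra.
  - intros t Ht. apply rpow_cont_pos; lra.
  - intros t Ht. rewrite rpow_pos_eq by lra.
    replace (Rpower t (q-1)) with ((q * Rpower t (q - 1)) / q) by (field; lra).
    unfold Rdiv at 2. apply derivable_pt_lim_scal_right.
    apply derivable_pt_lim_power; lra.
Qed.

Lemma int_on_zero a b : a <= b -> int_on (fun _ => 0) a b 0.
Proof.
  intros H. assert (F := ftc (fun _ => 0) (fun _ => 0) a b H).
  simpl in F. replace (0 - 0) with 0 in F by ring. apply F.
  - intros; apply continuity_pt_const; intros u w; auto.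
  - intros; apply derivable_pt_lim_const.
Qed.

Lemma int_on_scal f a b v l : a <= b -> int_on f a b v -> int_on (fun x => l * f x) a b (l * v).
Proof.
  intros H I. pose proof (int_on_lin _ _ _ _ _ _ l (int_on_zero a b H) I).
  replace (l * v) with (0 + l * v) by ring.
  eapply int_on_ext; [auto| |apply H0]. intros; simpl; ring.
Qed.

Lemma int_on_nonneg f a b v : a <= b -> int_on f a b v -> (forall x, a < x < b -> 0 <= f x) -> 0 <= v.
Proof. intros H I P. apply (int_on_le _ _ _ _ _ _ H (int_on_zero a b H) I); auto. Qed.

Lemma cont_plus f g x : continuity_pt f x -> continuity_pt g x -> continuity_pt (fun t => f t + g t) x.
Proof. intros; apply (continuity_pt_plus f g); auto. Qed.
Lemma cont_mult f g x : continuity_pt f x -> continuity_pt g x -> continuity_pt (fun t => f t * g t) x.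
Proof. intros; apply (continuity_pt_mult f g); auto. Qed.
Lemma cont_scal f x l : continuity_pt f x -> continuity_pt (fun t => l * f t) x.
Proof. intros; apply (continuity_pt_scal f); auto. Qed.

Lemma mono_limit (c B : R) (P : R -> R -> Prop) : 0 < c ->
  (forall e, 0 < e < c -> exists y, P e y) ->
  (forall e1 e2 y1 y2, 0 < e1 <= e2 -> e2 < c -> P e1 y1 -> P e2 y2 -> y2 <= y1) ->
  (forall e y, 0 < e < c -> P e y -> y <= B) ->
  exists L, forall eps, 0 < eps -> exists delta, 0 < delta /\
    forall e y, 0 < e < delta -> e < c -> P e y -> Rabs (y - L) < eps.
Proof.
  intros Hc Ex Mo Bd.
  set (E := fun y => exists e, 0 < e < c /\ P e y).
  assert (HB : bound E). { exists B. intros y [e [He Hy]]. eapply Bd; eauto. }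
  assert (HE : exists y, E y). { destruct (Ex (c/2) ltac:(lra)) as [y Hy]. exists y, (c/2); split; auto; lra. }
  destruct (completeness E HB HE) as [L [HL1 HL2]].
  exists L. intros eps Heps.
  assert (exists y0 e0, 0 < e0 < c /\ P e0 y0 /\ L - eps < y0).
  { apply NNPP; intro N. assert (is_upper_bound E (L - eps)).
    { intros y [e [He Hy]]. destruct (Rle_dec y (L - eps)); auto.
      exfalso; apply N; exists y, e; repeat split; try lra; auto. }
    specialize (HL2 _ H). lra. }
  destruct H as [y0 [e0 [He0 [Py0 Hy0]]]].
  exists e0. split; [lra|]. intros e y He Hec Py.
  assert (y0 <= y) by (apply (Mo e e0 y y0); auto; lra).
  assert (y <= L) by (apply HL1; exists e; split; auto; lra).
  apply Rabs_def1; lra.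
Qed.

Lemma half_limit g M q c : 0 < q -> 0 < c ->
  (forall t, 0 < t <= c -> continuity_pt g t) ->
  (forall t, 0 < t <= c -> Rabs (g t) <= M * rpow t (q - 1)) ->
  exists L, forall eps, 0 < eps -> exists delta, 0 < delta /\
    forall e v, 0 < e < delta -> e < c -> int_on g e c v -> Rabs (v - L) < eps.
Proof.
  intros Hq Hc Cg Bg.
  assert (HM : 0 <= M).
  { specialize (Bg c ltac:(lra)). pose proof (rpow_pos c (q-1) Hc). pose proof (Rabs_pos (g c)).
    destruct (Rle_dec 0 M); auto. nra. }
  set (h := fun t => g t + M * rpow t (q - 1)).
  assert (Ch : forall t, 0 < t <= c -> continuity_pt h t).
  { intros t Ht. apply cont_plus; auto. apply cont_scal. apply rpow_cont_pos; lra. }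
  assert (Hh : forall t, 0 < t <= c -> 0 <= h t).
  { intros t Ht. specialize (Bg t Ht). unfold h. unfold Rabs in Bg; destruct (Rcase_abs (g t)); lra. }
  destruct (mono_limit c (2 * M * (rpow c q / q)) (fun e y => int_on h e c y)) as [L0 HL0]; auto.
  - intros e He. apply int_on_cont. lra. intros; apply Ch; lra.
  - intros e1 e2 y1 y2 He He2 P1 P2.
    destruct (int_on_cont h e1 e2 ltac:(lra)) as [z Hz]. { intros; apply Ch; lra. }
    pose proof (int_on_chasles _ _ _ _ _ _ Hz P2).
    rewrite (int_on_unique _ _ _ _ _ P1 H).
    assert (0 <= z) by (eapply int_on_nonneg; [|apply Hz|]; [lra| intros; apply Hh; lra]).
    lra.
  - intros e y He Py.
    pose proof (int_on_scal _ e c _ (2*M) ltac:(lra) (int_pow e c q Hq ltac:(lra))).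
    assert (y <= 2 * M * ((rpow c q - rpow e q) / q)).
    { apply (int_on_le _ _ e c _ _ ltac:(lra) Py H). intros x Hx.
      specialize (Bg x ltac:(lra)). unfold h.
      unfold Rabs in Bg; destruct (Rcase_abs (g x)); lra. }
    pose proof (rpow_pos e q ltac:(lra)).
    assert (2 * M * ((rpow c q - rpow e q) / q) <= 2 * M * (rpow c q / q)).
    { apply Rmult_le_compat_l; [lra|]. unfold Rdiv. apply Rmult_le_compat_r.
      left; apply Rinv_0_lt_compat; auto. lra. }
    lra.
  - exists (L0 - M * (rpow c q / q)). intros eps Heps.
    destruct (HL0 (eps/2) ltac:(lra)) as [d1 [Hd1 H1]].
    set (d2 := rpow (eps * q / (2 * (M + 1))) (1 / q)).
    assert (Hd2 : 0 < d2) by (apply rpow_pos; apply Rdiv_lt_0_compat; nra).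
    exists (Rmin d1 d2). split. apply Rmin_pos; auto.
    intros e v He Hec Iv.
    assert (He1 : e < d1) by (eapply Rlt_le_trans; [apply He| apply Rmin_l]).
    assert (He2 : e < d2) by (eapply Rlt_le_trans; [apply He| apply Rmin_r]).
    destruct (int_on_cont h e c ltac:(lra)) as [y Hy]. { intros; apply Ch; lra. }
    specialize (H1 e y ltac:(lra) Hec Hy).
    pose proof (int_on_scal _ e c _ M ltac:(lra) (int_pow e c q Hq ltac:(lra))) as Ip.
    pose proof (int_on_lin _ _ _ _ _ _ 1 Iv Ip) as Iy.
    assert (Ey : y = v + 1 * (M * ((rpow c q - rpow e q) / q))).
    { eapply int_on_unique; [apply Hy|]. eapply int_on_ext; [lra| |apply Iy]. intros; unfold h; ring. }
    assert (Heq : rpow e q < eps * q / (2 * (M + 1))).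
    { replace (eps * q / (2 * (M + 1))) with (rpow d2 q).
      apply rpow_lt_mono; auto; lra.
      unfold d2. rewrite rpow_rpow. replace (1/q*q) with 1 by (field; lra). apply rpow_one.
      left; apply Rdiv_lt_0_compat; nra. left; apply Rdiv_lt_0_compat; nra. }
    pose proof (rpow_pos e q ltac:(lra)).
    assert (M * (rpow e q / q) < eps / 2).
    { apply Rle_lt_trans with (M * ((eps * q / (2*(M+1))) / q)).
      apply Rmult_le_compat_l; auto. unfold Rdiv; apply Rmult_le_compat_r. left; apply Rinv_0_lt_compat; auto. lra.
      replace (M * (eps * q / (2 * (M + 1)) / q)) with ((eps/2) * (M / (M+1))) by (field; lra).
      assert (M / (M+1) < 1). { apply Rmult_lt_reg_r with (M+1). lra. unfold Rdiv; rewrite Rmult_assoc, Rinv_l; lra. }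
      nra. }
    assert (0 <= M * (rpow e q / q)) by (apply Rmult_le_pos; auto; left; apply Rdiv_lt_0_compat; auto).
    replace (v - (L0 - M * (rpow c q / q))) with ((y - L0) + M * (rpow e q / q)).
    2:{ rewrite Ey. field; lra. }
    eapply Rle_lt_trans; [apply Rabs_triang|]. rewrite (Rabs_right (M * _)) by lra. lra.
Qed.

Lemma pi2_pos : 0 < PI / 2.
Proof. pose proof PI2_3_2; lra. Qed.

Lemma improper_exists F M q : 0 < q ->
  (forall th, 0 < Rabs th <= PI/2 -> continuity_pt F th) ->
  (forall th, 0 < Rabs th <= PI/2 -> Rabs (F th) <= M * rpow (Rabs th) (q - 1)) ->
  exists I, improper_int_sym F I.
Proof.
  intros Hq CF BF. pose proof pi2_pos as Hp.
  destruct (half_limit F M q (PI/2) Hq Hp) as [Lp HLp].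
  { intros t Ht. apply CF. rewrite Rabs_right; lra. }
  { intros t Ht. pose proof (BF t). rewrite Rabs_right in H by lra. apply H. lra. }
  destruct (half_limit (fun t => F (-t)) M q (PI/2) Hq Hp) as [Ln HLn].
  { intros t Ht. change (fun t0 => F (- t0)) with (comp F Ropp).
    apply continuity_pt_comp.
    { apply derivable_continuous_pt. exists (-1). change Ropp with (- id)%F.
      apply derivable_pt_lim_opp, derivable_pt_lim_id. }
    apply CF. rewrite Rabs_Ropp, Rabs_right; lra. }
  { intros t Ht. pose proof (BF (-t)). rewrite Rabs_left in H by lra. rewrite Ropp_involutive in H.
    apply H. lra. }
  exists (Ln + Lp).
  exists (fun e => epsilon (inhabits 0) (fun v => int_on F (- (PI / 2)) (- e) v)).
  exists (fun e => epsilon (inhabits 0) (fun v => int_on F e (PI / 2) v)).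
  assert (EL : forall e, 0 < e < PI/2 -> int_on F (- (PI / 2)) (- e)
      (epsilon (inhabits 0) (fun v => int_on F (- (PI / 2)) (- e) v))).
  { intros e He. apply epsilon_spec. apply int_on_cont. lra.
    intros x Hx. apply CF. rewrite Rabs_left; lra. }
  assert (ER : forall e, 0 < e < PI/2 -> int_on F e (PI / 2)
      (epsilon (inhabits 0) (fun v => int_on F e (PI / 2) v))).
  { intros e He. apply epsilon_spec. apply int_on_cont. lra.
    intros x Hx. apply CF. rewrite Rabs_right; lra. }
  split.
  - intros e He; split; auto.
  - intros eps Heps.
    destruct (HLp (eps/2) ltac:(lra)) as [d1 [Hd1 H1]].
    destruct (HLn (eps/2) ltac:(lra)) as [d2 [Hd2 H2]].
    exists (Rmin d1 d2). split. apply Rmin_pos; auto.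
    intros e He Hec.
    assert (e < d1) by (eapply Rlt_le_trans; [apply He| apply Rmin_l]).
    assert (e < d2) by (eapply Rlt_le_trans; [apply He| apply Rmin_r]).
    set (vl := epsilon _ (fun v => int_on F (- (PI / 2)) (- e) v)).
    set (vr := epsilon _ (fun v => int_on F e (PI / 2) v)).
    assert (Il : int_on F (- (PI / 2)) (- e) vl) by (apply EL; lra).
    assert (Ir : int_on F e (PI / 2) vr) by (apply ER; lra).
    destruct (int_opp F e (PI/2) ltac:(lra)) as [w [Hw1 Hw2]].
    { intros t Ht. apply CF. rewrite Rabs_left; lra. }
    rewrite <- (int_on_unique _ _ _ _ _ Hw1 Il) in *.
    specialize (H1 e vr ltac:(lra) Hec Ir). specialize (H2 e w ltac:(lra) Hec Hw2).
    replace (w + vr - (Ln + Lp)) with ((w - Ln) + (vr - Lp)) by ring.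
    eapply Rle_lt_trans; [apply Rabs_triang|]. lra.
Qed.

Lemma improper_le F I B : improper_int_sym F I ->
  (exists e0, 0 < e0 /\ forall e, 0 < e < e0 -> e < PI/2 -> forall v1 v2,
     int_on F (- (PI/2)) (- e) v1 -> int_on F e (PI/2) v2 -> v1 + v2 <= B) ->
  I <= B.
Proof.
  intros [Lf [Rf [HI HL]]] [e0 [He0 HB]]. pose proof pi2_pos.
  destruct (Rle_dec I B) as [|N]; auto. exfalso.
  destruct (HL (I - B) ltac:(lra)) as [d [Hd Hdd]].
  set (e := Rmin (Rmin d e0) (PI/2) / 2).
  assert (0 < e) by (unfold e; apply Rdiv_lt_0_compat; [repeat apply Rmin_pos|]; lra).
  assert (e < d /\ e < e0 /\ e < PI/2).
  { unfold e. pose proof (Rmin_l (Rmin d e0) (PI/2)). pose proof (Rmin_r (Rmin d e0) (PI/2)).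
    pose proof (Rmin_l d e0). pose proof (Rmin_r d e0). pose proof (Rmin_pos (Rmin d e0) (PI/2) (Rmin_pos d e0 Hd He0) H). lra. }
  destruct (HI e ltac:(lra)) as [I1 I2].
  specialize (HB e ltac:(lra) ltac:(lra) _ _ I1 I2).
  specialize (Hdd e ltac:(lra) ltac:(lra)).
  unfold Rabs in Hdd; destruct (Rcase_abs (Lf e + Rf e - I)); lra.
Qed.

Lemma cont_comp' f g x : continuity_pt f x -> continuity_pt g (f x) -> continuity_pt (fun t => g (f t)) x.
Proof. intros; apply (continuity_pt_comp f g); auto. Qed.

Lemma rpow_comp_cont phi k x : 0 < k -> (forall t, 0 <= phi t) -> continuity_pt phi x ->
  continuity_pt (fun t => rpow (phi t) k) x.
Proof.
  intros Hk Hn Hc. destruct (Req_dec (phi x) 0) as [E|E].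
  - intros eps Heps. set (eta := rpow eps (1/k)).
    assert (Heta : 0 < eta) by (apply rpow_pos; lra).
    destruct (Hc eta Heta) as [d [Hd Hx]]. exists d. split; auto.
    intros t Ht. specialize (Hx t Ht). simpl in *. unfold R_dist in *.
    rewrite E in *. rewrite rpow_0, Rminus_0_r in *. rewrite Rabs_right by (apply Rle_ge, rpow_nonneg).
    rewrite Rabs_right in Hx by (specialize (Hn t); lra).
    assert (Ee : rpow eta k = eps).
    { unfold eta. rewrite rpow_rpow by lra. replace (1/k*k) with 1 by (field; lra). apply rpow_one; lra. }
    rewrite <- Ee. apply rpow_lt_mono; auto.
  - apply (cont_comp' phi (fun y => rpow y k)); auto. apply rpow_cont_pos. specialize (Hn x); lra.
Qed.

Lemma inner_cont (V1 V2 v1 v2 : R) : continuity (fun t => (V1 + ((cos t - 1) * (V1 - v1) - sin t * (V2 - v2)) / 2) *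
   (V1 + ((cos t - 1) * (V1 - v1) - sin t * (V2 - v2)) / 2) +
   (V2 + (sin t * (V1 - v1) + (cos t - 1) * (V2 - v2)) / 2) *
   (V2 + (sin t * (V1 - v1) + (cos t - 1) * (V2 - v2)) / 2)).
Proof. reg. Qed.

Lemma vnorm_u_cont v V th : continuity_pt (fun t => vnorm (uvec v V t)) th.
Proof.
  destruct v as [v1 v2], V as [V1 V2].
  unfold vnorm, uvec, vadd, vsub, Amat; simpl.
  apply (cont_comp' _ sqrt); [apply inner_cont|].
  apply continuity_pt_sqrt. apply Rplus_le_le_0_compat; apply Rle_0_sqr.
Qed.

Lemma expdiff_cont k v V th : 0 < k -> continuity_pt (expdiff k v V) th.
Proof.
  intros Hk. unfold expdiff.
  apply (continuity_pt_minus (fun t => exp (rpow (vnorm (vadd V (Amat t (vsub V v)))) k)) (fun _ => _)).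
  - apply cont_comp'.
    + apply (rpow_comp_cont (fun t => vnorm (uvec v V t))); auto. intros; apply vnorm_nonneg.
      apply vnorm_u_cont.
    + apply derivable_continuous_pt, derivable_pt_exp.
  - apply continuity_pt_const. intros u w; auto.
Qed.

Lemma b_facts nu b : assumption_A nu b ->
  (forall th, 0 < Rabs th <= PI/2 -> continuity_pt b th) /\
  (exists cb Cb, 0 < cb < Cb /\
     (forall th, 0 < Rabs th <= PI/2 -> 0 <= b th <= Cb * rpow (Rabs th) (-1 - nu)) /\
     (forall th, 0 < th <= PI/2 -> cb * rpow th (-1 - nu) <= b th)).
Proof.
  intros [Hev [[c [C [Hc HcC]]] [d [D0 [Dd _]]]]].
  split.
  - intros th Hth. assert (E : d O = b) by (apply functional_extensionality; auto).
    rewrite <- E. apply derivable_continuous_pt. exists (d 1%nat th). apply Dd; auto.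
  - exists c, C. split; auto. split.
    + intros th Hth. destruct (Rle_dec 0 th).
      * rewrite Rabs_right in * by lra. destruct (HcC th ltac:(lra)).
        pose proof (rpow_nonneg th (-1-nu)). nra.
      * rewrite Rabs_left in * by lra. rewrite <- Hev by (rewrite Rabs_left; lra).
        destruct (HcC (-th) ltac:(lra)). pose proof (rpow_nonneg (-th) (-1-nu)). nra.
    + intros th Hth. apply HcC; auto.
Qed.

Lemma rpow_abs_diff x y k : 0 <= x -> 0 <= y -> 0 < k <= 1 ->
  Rabs (rpow x k - rpow y k) <= rpow (Rabs (x - y)) k.
Proof.
  intros Hx Hy Hk. destruct (Rle_dec y x).
  - rewrite (Rabs_right (x - y)) by lra.
    assert (rpow y k <= rpow x k) by (apply rpow_le_mono; lra).
    rewrite Rabs_right by lra.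
    pose proof (rpow_subadd y (x - y) k Hy ltac:(lra) Hk). replace (y + (x - y)) with x in H0 by ring. lra.
  - rewrite (Rabs_left1 (x - y)) by lra.
    assert (rpow x k <= rpow y k) by (apply rpow_le_mono; lra).
    rewrite Rabs_left1 by lra.
    pose proof (rpow_subadd x (- (x - y)) k Hx ltac:(lra) Hk). replace (x + - (x - y)) with y in H0 by ring. lra.
Qed.

Lemma expdiff_abs k v V th : 0 < k < 1 -> -(PI/2) <= th <= PI/2 ->
  Rabs (expdiff k v V th) <=
  exp (2 * rpow (vnorm V) k + 2 * rpow (vnorm v) k) * rpow (Rabs th) k.
Proof.
  intros Hk Hth. unfold expdiff. change (vadd V (Amat th (vsub V v))) with (uvec v V th).
  set (a := vnorm V). set (r := vnorm v). set (n := vnorm (uvec v V th)).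
  assert (Ha : 0 <= a) by apply vnorm_nonneg. assert (Hr : 0 <= r) by apply vnorm_nonneg.
  assert (Hn : 0 <= n) by apply vnorm_nonneg.
  assert (Hnu : n <= a + r) by apply u_le.
  set (z := rpow a k + rpow r k).
  assert (Hz1 : rpow (a + r) k <= z) by (apply rpow_subadd; lra).
  assert (Hz2 : rpow n k <= z) by (eapply Rle_trans; [apply (rpow_le_mono n (a+r) k); lra| auto]).
  assert (Hz3 : rpow a k <= z) by (eapply Rle_trans; [apply (rpow_le_mono a (a+r) k); lra| auto]).
  eapply Rle_trans; [apply (exp_diff_bound _ _ z); auto|].
  assert (Hd : Rabs (rpow n k - rpow a k) <= rpow (Rabs th) k * z).
  { eapply Rle_trans; [apply rpow_abs_diff; lra|].
    pose proof (u_close v V th Hth). fold a r n in H.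
    eapply Rle_trans; [apply rpow_le_mono; [split; [apply Rabs_pos| apply H]|lra]|].
    assert (Rabs th * (a + r) / 2 <= Rabs th * (a + r)) by (pose proof (Rabs_pos th); nra).
    eapply Rle_trans; [apply rpow_le_mono; [split; [pose proof (Rabs_pos th); nra| apply H0]|lra]|].
    rewrite rpow_mult by (try apply Rabs_pos; lra). apply Rmult_le_compat_l. apply rpow_nonneg. auto. }
  assert (z <= exp z) by (pose proof (exp_ineq1_le z); lra).
  replace (2 * rpow a k + 2 * rpow r k) with (z + z) by (unfold z; ring). rewrite exp_plus.
  pose proof (exp_pos z). pose proof (rpow_nonneg (Rabs th) k). pose proof (Rabs_pos (rpow n k - rpow a k)).
  assert (0 <= z) by (unfold z; pose proof (rpow_nonneg a k); pose proof (rpow_nonneg r k); lra).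
  assert (rpow (Rabs th) k * z <= rpow (Rabs th) k * exp z) by (apply Rmult_le_compat_l; lra).
  nra.
Qed.

Lemma nsq_bound v V th : 64 * vnorm v <= vnorm V -> 0 < Rabs th <= PI/2 ->
  vnorm (uvec v V th) * vnorm (uvec v V th) - vnorm V * vnorm V <=
  - vnorm V * vnorm V * (Rabs th * Rabs th) / 20 + Rabs th * vnorm V * vnorm v.
Proof.
  intros H Hth. rewrite key_formula.
  pose proof (cross_bound v V). pose proof (sin_abs_le th).
  assert (Ht : -(PI/2) <= th <= PI/2) by (unfold Rabs in Hth; destruct (Rcase_abs th); lra).
  pose proof (cos_ub1 th Ht).
  pose proof (vnorm_nonneg v). pose proof (vnorm_nonneg V).
  set (a := vnorm V) in *. set (r := vnorm v) in *. set (X := crossX v V) in *.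
  assert (E : Rabs th * Rabs th = th * th) by (rewrite <- Rabs_mult; apply Rabs_right; nra).
  rewrite E.
  assert (sin th * X <= Rabs th * a * r).
  { assert (Rabs (sin th * X) <= Rabs th * (a * r)).
    { rewrite Rabs_mult. apply Rmult_le_compat; auto; apply Rabs_pos. }
    pose proof (Rle_abs (sin th * X)). lra. }
  assert (a * a - r * r >= a * a / 2) by nra.
  assert (1 - cos th >= th * th / 5) by lra.
  assert (P1: 0 <= (1 - cos th - th*th/5) * (a*a - r*r)) by (apply Rmult_le_pos; nra).
  assert (P2: 0 <= th*th/5 * (a*a - r*r - a*a/2)).
  { apply Rmult_le_pos. pose proof (Rle_0_sqr th); unfold Rsqr in *; lra. lra. }
  nra.
Qed.

Lemma F_upper k v V th : 0 < k < 1 -> 1 <= vnorm V -> 64 * vnorm v <= vnorm V -> 0 < Rabs th <= PI/2 ->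
  rpow (vnorm (uvec v V th)) k - rpow (vnorm V) k <=
  k * rpow (vnorm V) (k - 1) * (- vnorm V * (Rabs th * Rabs th) / 40 + Rabs th * vnorm v / 2).
Proof.
  intros Hk Ha Hr Hth.
  pose proof (nsq_bound v V th Hr Hth).
  set (a := vnorm V) in *. set (r := vnorm v) in *. set (n := vnorm (uvec v V th)) in *.
  assert (Hn : 0 <= n) by apply vnorm_nonneg.
  pose proof (rpow_tangent n a k Hn ltac:(lra) Hk).
  assert (n - a <= - a * (Rabs th * Rabs th) / 40 + Rabs th * r / 2).
  { assert (n - a <= (n*n - a*a) / (2*a)).
    { apply Rmult_le_reg_r with (2*a). lra. unfold Rdiv. rewrite Rmult_assoc, Rinv_l by lra. pose proof (pow2_ge_0 (n - a)). nra. }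
    assert ((n*n - a*a) / (2*a) <= (- a * a * (Rabs th * Rabs th) / 20 + Rabs th * a * r) / (2*a)).
    { unfold Rdiv; apply Rmult_le_compat_r; auto. left; apply Rinv_0_lt_compat; lra. }
    replace ((- a * a * (Rabs th * Rabs th) / 20 + Rabs th * a * r) / (2*a)) with
      (- a * (Rabs th * Rabs th) / 40 + Rabs th * r / 2) in H2 by (field; lra).
    lra. }
  assert (0 <= k * rpow a (k-1)) by (pose proof (rpow_nonneg a (k-1)); nra).
  assert (k * rpow a (k - 1) * (n - a) <= k * rpow a (k - 1) * (- a * (Rabs th * Rabs th) / 40 + Rabs th * r / 2))
    by (apply Rmult_le_compat_l; auto).
  lra.
Qed.

Lemma expdiff_E0 k v V th : expdiff k v V th =
  exp (rpow (vnorm V) k) * (exp (rpow (vnorm (uvec v V th)) k - rpow (vnorm V) k) - 1).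
Proof.
  unfold expdiff. change (vadd V (Amat th (vsub V v))) with (uvec v V th). rewrite Rmult_minus_distr_l, <- exp_plus.
  replace (rpow (vnorm V) k + (rpow (vnorm (uvec v V th)) k - rpow (vnorm V) k)) with (rpow (vnorm (uvec v V th)) k) by ring.
  ring.
Qed.

Lemma case_C_point k v V th : 0 < k < 1 -> 1 <= vnorm V -> 64 * vnorm v <= vnorm V -> 0 < Rabs th <= PI/2 ->
  (40 * vnorm v <= vnorm V * Rabs th -> expdiff k v V th <= 0) /\
  (PI/4 <= Rabs th -> expdiff k v V th <= exp (rpow (vnorm V) k) * (exp (- (k / 150)) - 1)) /\
  (expdiff k v V th <= exp (rpow (vnorm V) k) *
       (rpow (vnorm V) (k - 1) * vnorm v * Rabs th * exp (rpow (vnorm v) k))).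
Proof.
  intros Hk Ha Hr Hth.
  pose proof (F_upper k v V th Hk Ha Hr Hth) as FU.
  rewrite expdiff_E0.
  set (a := vnorm V) in *. set (r := vnorm v) in *. set (n := vnorm (uvec v V th)) in *.
  set (t := Rabs th) in *. set (F := rpow n k - rpow a k) in *.
  assert (Hr0 : 0 <= r) by apply vnorm_nonneg.
  assert (HE0 : 0 < exp (rpow a k)) by apply exp_pos.
  assert (Hak : rpow a (k-1) * a = rpow a k).
  { rewrite <- (rpow_one a) at 2 by lra. rewrite <- rpow_plus by lra. f_equal; ring. }
  assert (Hak1 : 1 <= rpow a k).
  { rewrite <- (rpow_1 k). apply rpow_le_mono; lra. }
  assert (Hpa : 0 < rpow a (k-1)) by (apply rpow_pos; lra).
  split; [|split].
  - intros H. assert (F <= 0).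
    { eapply Rle_trans; [apply FU|]. assert (0 <= t) by (unfold t; apply Rabs_pos).
      assert (40 * r * t <= a * t * t) by nra. assert (0 <= a * t * t) by nra.
      assert (- a * (t*t) / 40 + t * r / 2 <= 0) by lra.
      assert (0 <= k * rpow a (k-1)) by nra. nra. }
    assert (exp F <= 1) by (rewrite <- exp_0; destruct H0; [left; apply exp_increasing|right; f_equal]; auto).
    nra.
  - intros H.
    assert (Hpi : PI / 4 >= 3/4) by (pose proof PI2_3_2; lra).
    assert (40 * r <= a * t) by nra.
    assert (F <= - (k/150)).
    { eapply Rle_trans; [apply FU|].
      assert (- a * (t*t) / 40 + t * r / 2 <= - a * (t*t) / 80) by nra.
      assert (k * rpow a (k - 1) * (- a * (t * t) / 40 + t * r / 2) <= k * rpow a (k-1) * (- a * (t*t)/80))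
        by (apply Rmult_le_compat_l; [apply Rmult_le_pos; lra | lra]).
      replace (k * rpow a (k-1) * (- a * (t*t)/80)) with (- (k * (rpow a (k-1) * a) * (t*t)/80)) in H2 by field.
      rewrite Hak in H2. assert (t * t >= 9/16) by nra. 
      assert (k * rpow a k * (t * t) / 80 >= k / 150).
      { assert (k * rpow a k * (t*t) >= k * 1 * (9/16)) by (apply Rmult_ge_compat; nra). lra. }
      lra. }
    assert (exp F <= exp (-(k/150))) by (destruct H1; [left; apply exp_increasing|right; f_equal]; auto).
    apply Rmult_le_compat_l; lra.
  - apply Rmult_le_compat_l; [lra|].
    assert (HF1 : F <= rpow a (k-1) * r * t).
    { eapply Rle_trans; [apply FU|]. assert (0 <= t) by (unfold t; apply Rabs_pos).
      assert (- a * (t*t) / 40 + t * r / 2 <= t * r) by nra.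
      assert (k * rpow a (k - 1) * (- a * (t * t) / 40 + t * r / 2) <= k * rpow a (k-1) * (t * r)) by (apply Rmult_le_compat_l; nra).
      assert (k * rpow a (k-1) * (t * r) <= rpow a (k-1) * r * t) by (assert (0 <= t*r) by (apply Rmult_le_pos; lra); assert (0 <= rpow a (k-1) * (t*r)) by (apply Rmult_le_pos; lra); nra).
      lra. }
    assert (HF2 : F <= rpow r k).
    { unfold F. pose proof (u_le v V th). fold n a r in H.
      assert (rpow n k <= rpow (a + r) k) by (apply rpow_le_mono; [split; [apply vnorm_nonneg|auto]|lra]).
      pose proof (rpow_subadd a r k ltac:(lra) Hr0 ltac:(lra)). lra. }
    destruct (Rle_dec F 0).
    + assert (exp F <= 1) by (rewrite <- exp_0; destruct r0; [left; apply exp_increasing|right; f_equal]; auto).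
      assert (0 <= t) by (unfold t; apply Rabs_pos).
      pose proof (exp_pos (rpow r k)). assert (0 <= rpow a (k-1) * r * t) by (apply Rmult_le_pos; nra).
      nra.
    + pose proof (expm1_le F ltac:(lra)).
      assert (exp F <= exp (rpow r k)) by (destruct HF2; [left; apply exp_increasing|right; f_equal]; auto).
      pose proof (exp_pos F). nra.
Qed.

Lemma int_on_const c a b : a <= b -> int_on (fun _ => c) a b (c * (b - a)).
Proof.
  intros H. replace (c * (b - a)) with ((fun t => c * t) b - (fun t => c * t) a) by ring.
  apply (ftc _ (fun t => c * t)); auto.
  - intros; apply continuity_pt_const; intros u w; auto.
  - intros x _. assert (D := derivable_pt_lim_scal id c x 1 (derivable_pt_lim_id x)).
    rewrite Rmult_1_r in D. exact D.
Qed.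

Lemma pi4_facts : 3/4 < PI/4 /\ PI/4 < PI/2.
Proof. pose proof PI2_3_2. lra. Qed.

Lemma side_bound h e T K D nu : 0 < nu < 1 -> 0 < e < PI/4 -> 0 <= T < PI/4 -> 0 <= K -> 0 <= D ->
  (forall t, 0 < t <= PI/2 -> continuity_pt h t) ->
  (forall t, 0 < t < T -> h t <= K * rpow t (- nu)) ->
  (forall t, 0 < t -> T <= t <= PI/2 -> h t <= 0) ->
  (forall t, PI/4 <= t <= PI/2 -> h t <= - D) ->
  forall v, int_on h e (PI/2) v -> v <= K * (rpow T (1 - nu) / (1 - nu)) - D * (PI/4).
Proof.
  intros Hnu He HT HK HD Ch H1 H2 H3 v Iv.
  pose proof pi4_facts as Hp.
  set (m := Rmax e T).
  assert (Hm : e <= m /\ T <= m /\ m < PI/4).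
  { unfold m. split; [apply Rmax_l|split; [apply Rmax_r|]]. apply Rmax_lub_lt; lra. }
  destruct (int_on_cont h e m ltac:(lra)) as [v1 I1]. { intros; apply Ch; lra. }
  destruct (int_on_cont h m (PI/4) ltac:(lra)) as [v2 I2]. { intros; apply Ch; lra. }
  destruct (int_on_cont h (PI/4) (PI/2) ltac:(lra)) as [v3 I3]. { intros; apply Ch; lra. }
  assert (Ev : v = v1 + v2 + v3).
  { eapply int_on_unique; [apply Iv|]. apply (int_on_chasles _ _ (PI/4)); auto.
    apply (int_on_chasles _ _ m); auto. }
  assert (B1 : v1 <= K * (rpow T (1 - nu) / (1 - nu))).
  { assert (Ip := int_on_scal _ e m _ K ltac:(lra) (int_pow e m (1 - nu) ltac:(lra) ltac:(lra))).
    assert (v1 <= K * ((rpow m (1 - nu) - rpow e (1 - nu)) / (1 - nu))).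
    { apply (int_on_le _ _ e m _ _ ltac:(lra) I1 Ip). intros x Hx.
      replace (1 - nu - 1) with (- nu) by ring. apply H1.
      split; [lra|]. destruct (Rle_dec T e). unfold m in Hx; rewrite Rmax_left in Hx; lra.
      unfold m in Hx; rewrite Rmax_right in Hx; lra. }
    assert ((rpow m (1 - nu) - rpow e (1 - nu)) / (1 - nu) <= rpow T (1 - nu) / (1 - nu)).
    { unfold Rdiv; apply Rmult_le_compat_r. left; apply Rinv_0_lt_compat; lra.
      pose proof (rpow_pos e (1-nu) ltac:(lra)).
      destruct (Rle_dec T e).
      - unfold m; rewrite Rmax_left by lra. pose proof (rpow_nonneg T (1-nu)). lra.
      - unfold m; rewrite Rmax_right by lra. lra. }
    assert (K * ((rpow m (1 - nu) - rpow e (1 - nu)) / (1 - nu)) <= K * (rpow T (1 - nu) / (1 - nu)))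
      by (apply Rmult_le_compat_l; auto).
    lra. }
  assert (B2 : v2 <= 0).
  { pose proof (int_on_zero m (PI/4) ltac:(lra)).
    apply (int_on_le _ _ m (PI/4) _ _ ltac:(lra) I2 H). intros x Hx. apply H2; lra. }
  assert (B3 : v3 <= - D * (PI/4)).
  { pose proof (int_on_const (-D) (PI/4) (PI/2) ltac:(lra)).
    replace (- D * (PI/4)) with (- D * (PI/2 - PI/4)) by field.
    apply (int_on_le _ _ (PI/4) (PI/2) _ _ ltac:(lra) I3 H). intros x Hx. apply H3. lra. }
  lra.
Qed.

Lemma trunc_abs F M q e v1 v2 : 0 < q -> 0 < e < PI/2 ->
  (forall th, 0 < Rabs th <= PI/2 -> continuity_pt F th) ->
  (forall th, 0 < Rabs th <= PI/2 -> Rabs (F th) <= M * rpow (Rabs th) (q - 1)) ->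
  int_on F (- (PI/2)) (- e) v1 -> int_on F e (PI/2) v2 ->
  v1 + v2 <= 2 * M * (rpow (PI/2) q / q).
Proof.
  intros Hq He CF BF I1 I2.
  assert (HM : 0 <= M).
  { specialize (BF (PI/2)). rewrite Rabs_right in BF by lra.
    pose proof (rpow_pos (PI/2) (q-1) ltac:(lra)). pose proof (Rabs_pos (F (PI/2))).
    destruct (Rle_dec 0 M); auto. assert (Rabs (F (PI / 2)) <= M * rpow (PI / 2) (q - 1)) by (apply BF; lra). nra. }
  assert (Ip := int_on_scal _ e (PI/2) _ M ltac:(lra) (int_pow e (PI/2) q Hq ltac:(lra))).
  assert (Bd : M * ((rpow (PI/2) q - rpow e q) / q) <= M * (rpow (PI/2) q / q)).
  { apply Rmult_le_compat_l; auto. unfold Rdiv; apply Rmult_le_compat_r. left; apply Rinv_0_lt_compat; lra.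
    pose proof (rpow_pos e q ltac:(lra)). lra. }
  assert (B2 : v2 <= M * ((rpow (PI/2) q - rpow e q) / q)).
  { apply (int_on_le _ _ e (PI/2) _ _ ltac:(lra) I2 Ip). intros x Hx.
    specialize (BF x). rewrite Rabs_right in BF by lra.
    assert (Rabs (F x) <= M * rpow x (q - 1)) by (apply BF; lra).
    pose proof (Rle_abs (F x)). lra. }
  destruct (int_opp F e (PI/2) ltac:(lra)) as [w [Hw1 Hw2]].
  { intros t Ht. apply CF. rewrite Rabs_left; lra. }
  rewrite (int_on_unique _ _ _ _ _ I1 Hw1).
  assert (B1 : w <= M * ((rpow (PI/2) q - rpow e q) / q)).
  { apply (int_on_le _ _ e (PI/2) _ _ ltac:(lra) Hw2 Ip). intros x Hx.
    specialize (BF (-x)). rewrite Rabs_left in BF by lra. rewrite Ropp_involutive in BF.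
    assert (Rabs (F (-x)) <= M * rpow x (q - 1)) by (apply BF; lra).
    pose proof (Rle_abs (F (-x))). lra. }
  lra.
Qed.

Lemma exp_le_mono x y : x <= y -> exp x <= exp y.
Proof. intros [H|H]; [left; apply exp_increasing; auto| rewrite H; lra]. Qed.

Lemma rpow_inv a p : 0 < a -> rpow (/ a) p = rpow a (- p).
Proof.
  intros Ha. rewrite !rpow_pos_eq by (try apply Rinv_0_lt_compat; lra).
  unfold Rpower. rewrite ln_Rinv by lra. f_equal; ring.
Qed.

Lemma rpow_le_base_exp x p1 p2 : 1 <= x -> p1 <= p2 -> rpow x p1 <= rpow x p2.
Proof. intros. rewrite !rpow_pos_eq by lra. apply Rle_Rpower; auto. Qed.

Lemma rpow_low t nu : 0 < nu < 1 -> 0 < t <= PI/2 -> / 4 <= rpow t (-1 - nu).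
Proof.
  intros Hnu Ht. pose proof PI_4.
  rewrite rpow_pos_eq by lra. replace (-1 - nu) with (- (1 + nu)) by ring. rewrite Rpower_Ropp.
  apply Rinv_le_contravar. apply exp_pos.
  assert (Rpower t (1 + nu) <= Rpower 2 (1 + nu)) by (apply Rle_Rpower_l; lra).
  assert (Rpower 2 (1 + nu) <= Rpower 2 2) by (apply Rle_Rpower; lra).
  replace (Rpower 2 2) with 4 in H1. lra.
  replace 2 with (INR 2) at 2 by (simpl; ring). rewrite Rpower_pow by lra. simpl; ring.
Qed.

Lemma alg_T k nu a r : 0 < nu < 1 -> 1 <= a -> 0 <= r ->
  rpow a (k - 1) * r * rpow (40 * r / a) (1 - nu) <= 40 * rpow a (k + nu - 2) * rpow r (2 - nu).
Proof.
  intros Hnu Ha Hr. destruct (Req_dec r 0) as [->|Hr0].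
  { replace (40 * 0 / a) with 0 by (field; lra). rewrite !rpow_0. lra. }
  unfold Rdiv. rewrite !rpow_mult by (try apply Rmult_le_pos; try left; try apply Rinv_0_lt_compat; lra).
  rewrite rpow_inv by lra.
  assert (E1 : rpow a (k - 1) * rpow a (- (1 - nu)) = rpow a (k + nu - 2)).
  { rewrite <- rpow_plus by lra. f_equal; ring. }
  assert (E2 : r * rpow r (1 - nu) = rpow r (2 - nu)).
  { rewrite <- (rpow_one r) at 1 by lra. rewrite <- rpow_plus by lra. f_equal; ring. }
  assert (L40 : rpow 40 (1 - nu) <= 40).
  { rewrite <- (rpow_one 40) at 2 by lra. apply rpow_le_base_exp; lra. }
  replace (rpow a (k - 1) * r * (rpow 40 (1 - nu) * rpow r (1 - nu) * rpow a (- (1 - nu))))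
    with (rpow 40 (1 - nu) * ((rpow a (k - 1) * rpow a (- (1 - nu))) * (r * rpow r (1 - nu)))) by ring.
  rewrite E1, E2. pose proof (rpow_nonneg a (k+nu-2)). pose proof (rpow_nonneg r (2-nu)).
  assert (0 <= rpow a (k + nu - 2) * rpow r (2 - nu)) by (apply Rmult_le_pos; auto).
  nra.
Qed.

Lemma g_point_C k nu b Cb v V th : 0 < k < 1 -> 0 < nu < 1 -> 1 <= vnorm V -> 64 * vnorm v <= vnorm V ->
  0 < Rabs th <= PI/2 -> 0 <= b th <= Cb * rpow (Rabs th) (-1 - nu) ->
  (40 * vnorm v <= vnorm V * Rabs th -> expdiff k v V th * b th <= 0) /\
  (expdiff k v V th * b th <=
     (exp (rpow (vnorm V) k) * (rpow (vnorm V) (k - 1) * vnorm v * exp (rpow (vnorm v) k)) * Cb)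
     * rpow (Rabs th) (- nu)).
Proof.
  intros Hk Hnu Ha Hr Hth Hb.
  destruct (case_C_point k v V th Hk Ha Hr Hth) as [P1 [_ P3]].
  split.
  - intros H. specialize (P1 H). nra.
  - set (t := Rabs th) in *. set (E0 := exp (rpow (vnorm V) k)) in *.
    set (A := rpow (vnorm V) (k - 1) * vnorm v * exp (rpow (vnorm v) k)) in *.
    assert (HA : 0 <= A).
    { unfold A. pose proof (rpow_nonneg (vnorm V) (k-1)). pose proof (vnorm_nonneg v).
      pose proof (exp_pos (rpow (vnorm v) k)). apply Rmult_le_pos; [apply Rmult_le_pos|]; lra. }
    assert (HE : 0 < E0) by apply exp_pos.
    assert (P3' : expdiff k v V th <= E0 * A * t).
    { replace (E0 * A * t) with (E0 * (rpow (vnorm V) (k - 1) * vnorm v * t * exp (rpow (vnorm v) k))) by (unfold A; ring). auto. }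
    assert (Ht : 0 < t) by lra.
    assert (0 <= E0 * A * t) by (apply Rmult_le_pos; [apply Rmult_le_pos|]; lra).
    assert (expdiff k v V th * b th <= E0 * A * t * b th).
    { apply Rmult_le_compat_r; lra. }
    assert (E0 * A * t * b th <= E0 * A * t * (Cb * rpow t (-1 - nu))) by (apply Rmult_le_compat_l; lra).
    assert (Et : t * rpow t (-1 - nu) = rpow t (- nu)).
    { rewrite <- (rpow_one t) at 1 by lra. rewrite <- rpow_plus by lra. f_equal; ring. }
    replace (E0 * A * Cb * rpow t (- nu)) with (E0 * A * t * (Cb * rpow t (-1 - nu))) by (rewrite <- Et; ring).
    lra.
Qed.

Lemma cont_opp F t : continuity_pt F (- t) -> continuity_pt (fun x => F (- x)) t.
Proof.
  intros H. apply (cont_comp' Ropp F); auto.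
  apply derivable_continuous_pt. exists (-1). change Ropp with (- id)%F.
  apply derivable_pt_lim_opp, derivable_pt_lim_id.
Qed.

Theorem lemma6p4 (nu : R) (b : R -> R)
  (Hnu : 0 < nu < 1) (Hb : assumption_A nu b)
  (kappa : R) (Hk : nu < kappa < 1) :
  exists C c_k C_k : R, 0 < C /\ 0 < c_k /\ 0 < C_k /\
    forall v V : vec2,
      (exists I, improper_int_sym (fun theta => expdiff kappa v V theta * b theta) I /\
         I <= exp (rpow (vnorm V) kappa) *
              (- c_k * indic_far C v V
               + C_k * rpow (Rmax (vnorm V) 1) (kappa + nu - 2)
                     * exp (C_k * rpow (vnorm v) kappa))) /\
      (exists J, improper_int_sym (fun theta => Rabs (expdiff kappa v V theta) * b theta) J /\
         J <= C_k * exp (C_k * rpow (vnorm v) kappa) * exp (C_k * rpow (vnorm V) kappa)).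
Proof.
  destruct (b_facts nu b Hb) as [Cbc [cb [Cb [Hcb [Bb Lb]]]]].
  assert (Hq : 0 < kappa - nu) by lra.
  set (q := kappa - nu) in *.
  pose proof pi4_facts as Hpi.
  set (K0 := 2 * Cb * (rpow (PI/2) q / q)).
  assert (HK0 : 0 < K0).
  { unfold K0. pose proof (rpow_pos (PI/2) q ltac:(lra)).
    apply Rmult_lt_0_compat; [lra| apply Rdiv_lt_0_compat; lra]. }
  destruct (polyexp 2 kappa ltac:(lra) ltac:(lra)) as [K2 [HK2 PK2]].
  destruct (polyexp (2 - nu) kappa ltac:(lra) ltac:(lra)) as [K3 [HK3 PK3]].
  set (c1 := (1 - exp (- (kappa / 150))) * cb / 4).
  assert (Hc1 : 0 < c1).
  { unfold c1. assert (exp (-(kappa/150)) < 1) by (rewrite <- exp_0; apply exp_increasing; lra).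
    apply Rmult_lt_0_compat; [apply Rmult_lt_0_compat|]; lra. }
  set (K4 := 80 * Cb * K3 / (1 - nu)).
  assert (HK4 : 0 < K4).
  { unfold K4. apply Rdiv_lt_0_compat; [|lra]. apply Rmult_lt_0_compat; [|lra]. lra. }
  set (Ck := 130 + K0 * exp 2 + K0 * K2 + K4 + K0).
  assert (HK02 : 0 < K0 * exp 2) by (apply Rmult_lt_0_compat; [lra|apply exp_pos]).
  assert (HK022 : 0 < K0 * K2) by (apply Rmult_lt_0_compat; lra).
  exists 64, (c1 / 2), Ck.
  split; [lra|]. split; [lra|]. split; [unfold Ck; lra|].
  intros v V.
  set (a := vnorm V). set (r := vnorm v).
  assert (Ha : 0 <= a) by apply vnorm_nonneg. assert (Hr : 0 <= r) by apply vnorm_nonneg.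
  set (A := rpow a kappa). set (Rk := rpow r kappa).
  assert (HA : 0 <= A) by apply rpow_nonneg. assert (HR : 0 <= Rk) by apply rpow_nonneg.
  set (E0 := exp A).
  assert (HE0 : 1 <= E0) by (unfold E0; rewrite <- exp_0; apply exp_le_mono; lra).
  set (M := Cb * exp (2 * A + 2 * Rk)).
  assert (BF1 : forall th, 0 < Rabs th <= PI/2 ->
     Rabs (expdiff kappa v V th) * b th <= M * rpow (Rabs th) (q - 1)).
  { intros th Hth. destruct (Bb th Hth) as [Hb0 Hb1].
    assert (Hth' : -(PI/2) <= th <= PI/2) by (unfold Rabs in Hth; destruct (Rcase_abs th); lra).
    pose proof (expdiff_abs kappa v V th ltac:(lra) Hth') as H. fold a r A Rk in H.
    set (X := exp (2 * A + 2 * Rk)) in *.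
    assert (0 <= rpow (Rabs th) kappa) by apply rpow_nonneg.
    assert (Rabs (expdiff kappa v V th) * b th <= (X * rpow (Rabs th) kappa) * (Cb * rpow (Rabs th) (-1 - nu))).
    { apply Rmult_le_compat; auto. apply Rabs_pos. }
    replace (q - 1) with (kappa + (-1 - nu)) by (unfold q; ring).
    rewrite rpow_plus by lra. unfold M. fold X. lra. }
  assert (BF1' : forall th, 0 < Rabs th <= PI/2 ->
     Rabs (expdiff kappa v V th * b th) <= M * rpow (Rabs th) (q - 1)).
  { intros th Hth. rewrite Rabs_mult. destruct (Bb th Hth). rewrite (Rabs_right (b th)) by lra. auto. }
  assert (BF2 : forall th, 0 < Rabs th <= PI/2 ->
     Rabs (Rabs (expdiff kappa v V th) * b th) <= M * rpow (Rabs th) (q - 1)).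
  { intros th Hth. rewrite Rabs_mult, Rabs_Rabsolu. destruct (Bb th Hth). rewrite (Rabs_right (b th)) by lra. auto. }
  assert (CF1 : forall th, 0 < Rabs th <= PI/2 -> continuity_pt (fun t => expdiff kappa v V t * b t) th).
  { intros th Hth. apply cont_mult; [apply expdiff_cont; lra| auto]. }
  assert (CF2 : forall th, 0 < Rabs th <= PI/2 -> continuity_pt (fun t => Rabs (expdiff kappa v V t) * b t) th).
  { intros th Hth. apply cont_mult; [| auto]. apply (cont_comp' _ Rabs). apply expdiff_cont; lra.
    apply Rcontinuity_abs. }
  destruct (improper_exists _ M q Hq CF1 BF1') as [I HI].
  destruct (improper_exists _ M q Hq CF2 BF2) as [J HJ].
  assert (EM : 2 * M * (rpow (PI/2) q / q) = K0 * exp (2 * A + 2 * Rk)) by (unfold M, K0; ring).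
  split.
  - exists I. split; auto. apply (improper_le _ _ _ HI).
    assert (TB : forall e v1 v2, 0 < e < PI/2 ->
      int_on (fun t => expdiff kappa v V t * b t) (- (PI/2)) (- e) v1 ->
      int_on (fun t => expdiff kappa v V t * b t) e (PI/2) v2 ->
      v1 + v2 <= K0 * exp (2 * A + 2 * Rk)).
    { intros e v1 v2 He I1 I2. rewrite <- EM. apply (trunc_abs _ M q e v1 v2 Hq He CF1 BF1' I1 I2). }
    destruct (Rlt_dec a 1) as [HaL|HaG].
    +
      unfold indic_far. fold a r. destruct (Rle_dec 1 a); [lra|].
      rewrite Rmax_right by lra. rewrite rpow_1. fold Rk.
      exists (PI/2). split; [lra|]. intros e He He2 v1 v2 I1 I2.
      eapply Rle_trans; [apply (TB e v1 v2 ltac:(lra) I1 I2)|].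
      assert (A <= 1) by (unfold A; rewrite <- (rpow_1 kappa); apply rpow_le_mono; lra).
      assert (exp (2 * A + 2 * Rk) <= exp 2 * exp (Ck * Rk)).
      { rewrite <- exp_plus. apply exp_le_mono. assert (2 <= Ck) by (unfold Ck; lra). nra. }
      assert (K0 * exp 2 <= Ck) by (unfold Ck; lra).
      pose proof (exp_pos (Ck * Rk)).
      assert (K0 * exp (2 * A + 2 * Rk) <= K0 * (exp 2 * exp (Ck * Rk))) by (apply Rmult_le_compat_l; lra).
      assert (K0 * exp 2 * exp (Ck * Rk) <= Ck * exp (Ck * Rk)) by (apply Rmult_le_compat_r; lra).
      assert (Ck * exp (Ck * Rk) <= E0 * (Ck * exp (Ck * Rk))).
      { assert (0 <= Ck * exp (Ck * Rk)) by (apply Rmult_le_pos; [unfold Ck; lra | left; apply exp_pos]). nra. }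
      replace (E0 * (- (c1 / 2) * 0 + Ck * 1 * exp (Ck * Rk))) with (E0 * (Ck * exp (Ck * Rk))) by ring.
      lra.
    + set (P := rpow a (kappa + nu - 2)).
      assert (HP : 0 < P) by (apply rpow_pos; lra).
      destruct (Rle_dec (64 * r) a) as [HC|HB].
      *
        unfold indic_far. fold a r. destruct (Rle_dec 1 a); [|lra]. destruct (Rle_dec (64 * r) a); [|lra].
        rewrite Rmax_left by lra. fold P Rk.
        set (T := 40 * r / a).
        assert (HT : 0 <= T < PI/4).
        { unfold T. split. apply Rmult_le_pos; [lra| left; apply Rinv_0_lt_compat; lra].
          apply Rle_lt_trans with (40/64); [|lra].
          apply Rmult_le_reg_r with a; [lra|]. unfold Rdiv. rewrite Rmult_assoc, Rinv_l by lra. lra. }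
        assert (HTt : forall t, 0 < t -> T <= t -> 40 * r <= a * t).
        { intros t Ht HTt. unfold T in HTt.
          apply Rmult_le_compat_r with (r := a) in HTt; [|lra].
          unfold Rdiv in HTt. rewrite Rmult_assoc, Rinv_l in HTt by lra. lra. }
        set (K := E0 * (rpow a (kappa - 1) * r * exp Rk) * Cb).
        assert (HKp : 0 <= K).
        { unfold K. pose proof (rpow_nonneg a (kappa - 1)). pose proof (exp_pos Rk).
          apply Rmult_le_pos; [apply Rmult_le_pos|]; try lra.
          apply Rmult_le_pos; [apply Rmult_le_pos|]; lra. }
        assert (GP : forall th, 0 < Rabs th <= PI/2 ->
           (T <= Rabs th -> expdiff kappa v V th * b th <= 0) /\
           expdiff kappa v V th * b th <= K * rpow (Rabs th) (- nu)).
        { intros th Hth. destruct (g_point_C kappa nu b Cb v V th ltac:(lra) Hnu r0 r1 Hth (Bb th Hth)) as [G1 G2].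
          split.
          - intros H. apply G1. specialize (HTt (Rabs th) ltac:(lra) H). fold a r. lra.
          - apply G2. }
        exists (PI/4). split; [lra|]. intros e He He2 v1 v2 I1 I2.
        destruct (int_opp (fun t => expdiff kappa v V t * b t) e (PI/2) ltac:(lra)) as [w [Hw1 Hw2]].
        { intros t Ht. apply CF1. rewrite Rabs_left; lra. }
        rewrite (int_on_unique _ _ _ _ _ I1 Hw1).
        assert (B1 : w <= K * (rpow T (1 - nu) / (1 - nu)) - 0 * (PI/4)).
        { apply (side_bound (fun t => expdiff kappa v V (-t) * b (-t)) e T K 0 nu Hnu ltac:(lra) HT HKp ltac:(lra)); auto.
          - intros t Ht. apply (cont_opp (fun t => expdiff kappa v V t * b t)). apply CF1. rewrite Rabs_left; lra.
          - intros t Ht. pose proof (GP (-t)). rewrite Rabs_left in H by lra. rewrite Ropp_involutive in H.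
            apply H; lra.
          - intros t Ht0 Ht. pose proof (GP (-t)). rewrite Rabs_left in H by lra. rewrite Ropp_involutive in H.
            apply H; lra.
          - intros t Ht. pose proof (GP (-t)). rewrite Rabs_left in H by lra. rewrite Ropp_involutive in H.
            rewrite Ropp_0. apply H; lra. }
        assert (B2 : v2 <= K * (rpow T (1 - nu) / (1 - nu)) - (E0 * c1) * (PI/4)).
        { apply (side_bound (fun t => expdiff kappa v V t * b t) e T K (E0 * c1) nu Hnu ltac:(lra) HT HKp); auto.
          - apply Rmult_le_pos; lra.
          - intros t Ht. apply CF1. rewrite Rabs_right; lra.
          - intros t Ht. pose proof (GP t). rewrite Rabs_right in H by lra. apply H; lra.
          - intros t Ht0 Ht. pose proof (GP t). rewrite Rabs_right in H by lra. apply H; lra.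
          - intros t Ht.
            assert (Hth : 0 < Rabs t <= PI/2) by (rewrite Rabs_right; lra).
            destruct (case_C_point kappa v V t ltac:(lra) r0 r1 Hth) as [_ [P2 _]].
            rewrite Rabs_right in P2 by lra. specialize (P2 ltac:(lra)). fold a A in P2. fold E0 in P2.
            assert (Lb' : cb / 4 <= b t).
            { pose proof (Lb t ltac:(lra)). pose proof (rpow_low t nu Hnu ltac:(lra)).
              assert (cb * / 4 <= cb * rpow t (-1 - nu)) by (apply Rmult_le_compat_l; lra). lra. }
            assert (Hneg : E0 * (exp (- (kappa / 150)) - 1) <= 0).
            { assert (exp (-(kappa/150)) < 1) by (rewrite <- exp_0; apply exp_increasing; lra). nra. }
            assert (expdiff kappa v V t * b t <= E0 * (exp (- (kappa / 150)) - 1) * b t).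
            { apply Rmult_le_compat_r; auto. lra. }
            assert (E0 * (exp (- (kappa / 150)) - 1) * b t <= E0 * (exp (- (kappa / 150)) - 1) * (cb / 4)).
            { apply Rmult_le_compat_neg_l; auto. }
            replace (- (E0 * c1)) with (E0 * (exp (- (kappa / 150)) - 1) * (cb / 4)) by (unfold c1; field).
            lra. }
        assert (Al : rpow a (kappa - 1) * r * rpow T (1 - nu) <= 40 * P * rpow r (2 - nu)).
        { unfold T, P. apply alg_T; lra. }
        assert (Ar : rpow r (2 - nu) <= K3 * exp Rk) by (apply PK3; auto).
        assert (Kt : K * rpow T (1 - nu) <= E0 * (40 * Cb * K3) * P * exp (2 * Rk)).
        { unfold K. replace (2 * Rk) with (Rk + Rk) by ring. rewrite exp_plus.
          pose proof (exp_pos Rk). pose proof (rpow_nonneg T (1 - nu)).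
          replace (E0 * (rpow a (kappa - 1) * r * exp Rk) * Cb * rpow T (1 - nu)) with
            ((E0 * exp Rk * Cb) * (rpow a (kappa - 1) * r * rpow T (1 - nu))) by ring.
          assert (0 <= E0 * exp Rk * Cb) by (apply Rmult_le_pos; [apply Rmult_le_pos|]; lra).
          assert (40 * P * rpow r (2 - nu) <= 40 * P * (K3 * exp Rk)) by (apply Rmult_le_compat_l; lra).
          assert ((E0 * exp Rk * Cb) * (rpow a (kappa - 1) * r * rpow T (1 - nu)) <= (E0 * exp Rk * Cb) * (40 * P * (K3 * exp Rk)))
            by (apply Rmult_le_compat_l; lra).
          lra. }
        assert (Fin : 2 * (K * (rpow T (1 - nu) / (1 - nu))) <= E0 * (Ck * P * exp (Ck * Rk))).
        { replace (2 * (K * (rpow T (1 - nu) / (1 - nu)))) with (2 / (1 - nu) * (K * rpow T (1 - nu))) by (field; lra).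
          assert (H2n : 0 < 2 / (1 - nu)) by (apply Rdiv_lt_0_compat; lra).
          assert (2 / (1 - nu) * (K * rpow T (1 - nu)) <= 2 / (1 - nu) * (E0 * (40 * Cb * K3) * P * exp (2 * Rk)))
            by (apply Rmult_le_compat_l; lra).
          replace (2 / (1 - nu) * (E0 * (40 * Cb * K3) * P * exp (2 * Rk))) with (E0 * (K4 * P * exp (2 * Rk))) in H by (unfold K4; field; lra).
          assert (K4 * P * exp (2 * Rk) <= Ck * P * exp (Ck * Rk)).
          { apply Rmult_le_compat; try lra. apply Rmult_le_pos; lra. left; apply exp_pos.
            apply Rmult_le_compat_r; [lra| unfold Ck; lra].
            apply exp_le_mono. assert (2 <= Ck) by (unfold Ck; lra). nra. }
          assert (E0 * (K4 * P * exp (2 * Rk)) <= E0 * (Ck * P * exp (Ck * Rk))) by (apply Rmult_le_compat_l; lra).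
          lra. }
        assert (E0 * c1 * (PI/4) >= E0 * (c1/2)) by (assert (0 <= E0 * c1) by (apply Rmult_le_pos; lra); nra).
        replace (E0 * (- (c1 / 2) * 1 + Ck * P * exp (Ck * Rk))) with (E0 * (Ck * P * exp (Ck * Rk)) - E0 * (c1/2)) by ring.
        lra.
      *
        unfold indic_far. fold a r. destruct (Rle_dec 1 a); [|lra]. destruct (Rle_dec (64 * r) a); [lra|].
        rewrite Rmax_left by lra. fold P Rk.
        exists (PI/2). split; [lra|]. intros e He He2 v1 v2 I1 I2.
        eapply Rle_trans; [apply (TB e v1 v2 ltac:(lra) I1 I2)|].
        assert (F1 : 1 <= K2 * exp A * P).
        { assert (E : P * rpow a 2 = rpow a (kappa + nu)).
          { unfold P. rewrite <- rpow_plus by lra. f_equal; ring. }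
          assert (1 <= rpow a (kappa + nu)).
          { rewrite <- (rpow_zero a) by lra. apply rpow_le_base_exp; lra. }
          assert (rpow a 2 <= K2 * exp A) by (apply PK2; auto).
          assert (P * rpow a 2 <= P * (K2 * exp A)) by (apply Rmult_le_compat_l; lra).
          lra. }
        assert (F2 : A <= 64 * Rk).
        { unfold A, Rk. eapply Rle_trans.
          apply (rpow_le_mono a (64 * r) kappa); lra.
          rewrite rpow_mult by lra.
          assert (rpow 64 kappa <= 64).
          { rewrite <- (rpow_one 64) at 2 by lra. apply rpow_le_base_exp; lra. }
          apply Rmult_le_compat_r; auto. }
        assert (St1 : K0 * exp (2 * A + 2 * Rk) <= E0 * ((K0 * K2) * P * exp (2 * A + 2 * Rk))).
        { assert (Ex : exp (2 * A + 2 * Rk) = E0 * exp (A + 2 * Rk)).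
          { unfold E0. rewrite <- exp_plus. f_equal. ring. }
          assert (Ey : exp (2 * A + 2 * Rk) = exp A * exp (A + 2 * Rk)).
          { rewrite <- exp_plus. f_equal. ring. }
          rewrite Ex at 1.
          replace (E0 * (K0 * K2 * P * exp (2 * A + 2 * Rk))) with
            ((K0 * E0 * exp (A + 2 * Rk)) * (K2 * exp A * P)) by (rewrite Ey; ring).
          assert (0 <= K0 * E0 * exp (A + 2 * Rk)).
          { apply Rmult_le_pos; [apply Rmult_le_pos|]; try lra. left; apply exp_pos. }
          nra. }
        assert (St2 : (K0 * K2) * P * exp (2 * A + 2 * Rk) <= Ck * P * exp (Ck * Rk)).
        { apply Rmult_le_compat; try lra. apply Rmult_le_pos; lra. left; apply exp_pos.
          apply Rmult_le_compat_r; [lra| unfold Ck; lra].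
          apply exp_le_mono. assert (130 <= Ck) by (unfold Ck; lra). nra. }
        replace (E0 * (- (c1 / 2) * 0 + Ck * P * exp (Ck * Rk))) with (E0 * (Ck * P * exp (Ck * Rk))) by ring.
        assert (E0 * (K0 * K2 * P * exp (2 * A + 2 * Rk)) <= E0 * (Ck * P * exp (Ck * Rk))) by (apply Rmult_le_compat_l; lra).
        lra.
  - exists J. split; auto. apply (improper_le _ _ _ HJ).
    exists (PI/2). split; [lra|]. intros e He He2 v1 v2 I1 I2.
    eapply Rle_trans; [apply (trunc_abs _ M q e v1 v2 Hq ltac:(lra) CF2 BF2 I1 I2)|].
    rewrite EM. fold a r A Rk.
    assert (exp (2 * A + 2 * Rk) <= exp (Ck * Rk) * exp (Ck * A)).
    { rewrite <- exp_plus. apply exp_le_mono. assert (2 <= Ck) by (unfold Ck; lra). nra. }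
    assert (K0 <= Ck) by (unfold Ck; lra).
    pose proof (exp_pos (2 * A + 2 * Rk)).
    assert (K0 * exp (2 * A + 2 * Rk) <= Ck * exp (2 * A + 2 * Rk)) by (apply Rmult_le_compat_r; lra).
    assert (Ck * exp (2 * A + 2 * Rk) <= Ck * (exp (Ck * Rk) * exp (Ck * A))) by (apply Rmult_le_compat_l; lra).
    lra.
Qed.
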